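(* For every integer $d\ge 30$, $N_d>\frac{\sqrt d}{2}$; that is, there exists a well-rounded unimodular lattice in $\mathbb{R}^d$ whose covering radius is strictly larger than $\sqrt d/2$ (the covering radius of $\mathbb{Z}^d$).
   Context: A lattice $\Lambda\subset\mathbb{R}^d$ is \emph{well-rounded} if its shortest nonzero vectors (with respect to the Euclidean norm) span $\mathbb{R}^d$, and \emph{unimodular} if its covolume equals $1$. The \emph{covering radius} $r(\Lambda)$ of a lattice $\Lambda\subset\mathbb{R}^d$ is the least $r\ge 0$ such that $\mathbb{R}^d=\Lambda+B_r$, where $B_r$ is the closed Euclidean ball of radius $r$ centered at $0$. $N_d$ denotes the supremum of $r(\Lambda)$ over all well-rounded unimodular lattices $\Lambda\subset\mathbb{R}^d$. *)

(* Defs.v *)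
From Stdlib Require Import Reals ZArith.
From mathcomp Require Import ssreflect ssrfun ssrbool eqtype ssrnat seq choice
  fintype finfun bigop fingroup perm.

Set Implicit Arguments. Unset Strict Implicit. Unset Printing Implicit Defensive.

Local Open Scope R_scope.

Definition vec (d : nat) := 'I_d -> R.

Definition sumR (d : nat) (f : 'I_d -> R) : R := \big[Rplus/0]_(i < d) f i.

Definition dotR (d : nat) (x y : vec d) : R := sumR (fun i => x i * y i).
Definition normR (d : nat) (x : vec d) : R := sqrt (dotR x x).
Definition subv (d : nat) (x y : vec d) : vec d := fun i => x i - y i.

Definition lattice_pt (d : nat) (B : 'I_d -> vec d) (z : 'I_d -> Z) : vec d :=
  fun i => sumR (fun j => IZR (z j) * B j i).

Definition in_lattice (d : nat) (B : 'I_d -> vec d) (v : vec d) : Prop :=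
  exists z : 'I_d -> Z, forall i, v i = lattice_pt B z i.

Definition detR (d : nat) (M : 'I_d -> 'I_d -> R) : R :=
  \big[Rplus/0]_(s : 'S_d)
     ((-1) ^ (nat_of_bool (odd_perm s)) * \big[Rmult/1]_(i < d) M i (s i)).

Definition covolume (d : nat) (B : 'I_d -> vec d) : R := Rabs (detR B).
Definition unimodular (d : nat) (B : 'I_d -> vec d) : Prop := covolume B = 1.

Definition nonzero (d : nat) (v : vec d) : Prop := exists i, v i <> 0.

Definition shortest_vector (d : nat) (B : 'I_d -> vec d) (v : vec d) : Prop :=
  in_lattice B v /\ nonzero v /\
  forall w, in_lattice B w -> nonzero w -> normR v <= normR w.

Definition spans (d : nat) (S : vec d -> Prop) : Prop :=
  forall x : vec d, exists l : seq (R * vec d),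
    (forall p, List.In p l -> S p.2) /\
    forall i, x i = \big[Rplus/0]_(p <- l) (p.1 * p.2 i).

Definition well_rounded (d : nat) (B : 'I_d -> vec d) : Prop :=
  spans (shortest_vector B).

Definition covers (d : nat) (B : 'I_d -> vec d) (r : R) : Prop :=
  forall x : vec d, exists v, in_lattice B v /\ normR (subv x v) <= r.

Definition is_covering_radius (d : nat) (B : 'I_d -> vec d) (r : R) : Prop :=
  0 <= r /\ covers B r /\ forall r', 0 <= r' -> covers B r' -> r <= r'.

(* Main.v *)
Require Import Defs.
From Stdlib Require Import Reals ZArith.
From mathcomp Require Import ssreflect ssrfun ssrbool eqtype ssrnat seq choice
  fintype finfun bigop fingroup perm.
From Stdlib Require Import Lra Lia Psatz.
From mathcomp Require Import div.
From HB Require Import structures.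
From mathcomp Require Import zify.

Set Implicit Arguments. Unset Strict Implicit. Unset Printing Implicit Defensive.
Local Open Scope R_scope.


Lemma Rplus_assoc' : associative Rplus. Proof. move=> *; ring. Qed.
Lemma Rmult_assoc' : associative Rmult. Proof. move=> *; ring. Qed.
HB.instance Definition _ := Monoid.isComLaw.Build R 0 Rplus Rplus_assoc' Rplus_comm Rplus_0_l.
HB.instance Definition _ := Monoid.isComLaw.Build R 1 Rmult Rmult_assoc' Rmult_comm Rmult_1_l.

Definition isZ (x : R) := exists z : Z, x = IZR z.

Lemma isZ_add x y : isZ x -> isZ y -> isZ (x + y).
Proof. by move=> [a ->] [b ->]; exists (a + b)%Z; rewrite plus_IZR. Qed.
Lemma isZ_mul x y : isZ x -> isZ y -> isZ (x * y).
Proof. by move=> [a ->] [b ->]; exists (a * b)%Z; rewrite mult_IZR. Qed.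
Lemma isZ_opp x : isZ x -> isZ (- x).
Proof. by move=> [a ->]; exists (- a)%Z; rewrite opp_IZR. Qed.
Lemma isZ_0 : isZ 0. Proof. by exists 0%Z. Qed.
Lemma isZ_1 : isZ 1. Proof. by exists 1%Z. Qed.

Lemma isZ_sum I (r : seq I) (P : pred I) F :
  (forall i, P i -> isZ (F i)) -> isZ (\big[Rplus/0]_(i <- r | P i) F i).
Proof. move=> H; apply: big_ind => //; [exact: isZ_0| exact: isZ_add]. Qed.

Lemma sum_le I (r : seq I) (P : pred I) F G :
  (forall i, P i -> F i <= G i) ->
  \big[Rplus/0]_(i <- r | P i) F i <= \big[Rplus/0]_(i <- r | P i) G i.
Proof. move=> H; apply: big_ind2 => //; [lra| move=> *; lra]. Qed.

Lemma sum_ge0 I (r : seq I) (P : pred I) F :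
  (forall i, P i -> 0 <= F i) -> 0 <= \big[Rplus/0]_(i <- r | P i) F i.
Proof. move=> H; apply: big_ind => //; [lra| move=> *; lra]. Qed.

Lemma sum_scal I (r : seq I) (P : pred I) a F :
  \big[Rplus/0]_(i <- r | P i) (a * F i) = a * \big[Rplus/0]_(i <- r | P i) F i.
Proof.
elim: r => [|x r IH]; rewrite ?big_nil ?big_cons; first ring.
by case: (P x); rewrite IH; ring.
Qed.

Lemma isZ_pos_ge1 x : isZ x -> 0 < x -> 1 <= x.
Proof. move=> [z ->] /lt_0_IZR h; apply: IZR_le; lia. Qed.

Lemma isZ_half_consec x : isZ x -> isZ (x * (x - 1) / 2).
Proof.
move=> [z ->]; case: (Zeven_odd_dec z) => [/Zeven_ex [m ->]|/Zodd_ex [m ->]].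
  exists (m * (2 * m - 1))%Z; rewrite !(mult_IZR, minus_IZR). simpl; field.
exists (m * (2 * m + 1))%Z; rewrite !(mult_IZR, plus_IZR). simpl; field.
Qed.

Lemma isZ_consec_ge x : isZ x -> 0 <= x * (x - 1).
Proof.
move=> [z ->]; case: (Z.le_gt_cases z 0) => h.
  have h1 := IZR_le _ _ h; nra.
have h1 : (1 <= z)%Z by lia. have h2 := IZR_le _ _ h1; nra.
Qed.

Lemma sum_count (N k : nat) (a b : R) :
  sumR (fun i : 'I_N => if (i < k)%N then a else b) =
  INR (minn k N) * a + INR (N - k) * b.
Proof.
rewrite /sumR; elim: N => [|N IH]; first by rewrite big_ord0 /=; ring.
rewrite big_ord_recr /= IH.
case: (ltnP N k) => h.
  try (have -> : minn k N.+1 = N.+1 by lia).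
  try (have -> : minn k N = N by lia).
  have -> : (N.+1 - k = 0)%N by lia.
  have -> : (N - k = 0)%N by lia.
  rewrite S_INR /=; ring.
try (have -> : minn k N.+1 = k by lia).
try (have -> : minn k N = k by lia).
have -> : (N.+1 - k = (N - k).+1)%N by lia.
rewrite S_INR; ring.
Qed.

Lemma prod_count (N k : nat) (a b : R) :
  \big[Rmult/1]_(i < N) (if (i < k)%N then a else b) = a ^ (minn k N) * b ^ (N - k).
Proof.
elim: N => [|N IH]; first by rewrite big_ord0 /=; ring.
rewrite big_ord_recr /= IH.
case: (ltnP N k) => h.
  try (have -> : minn k N.+1 = N.+1 by lia).
  try (have -> : minn k N = N by lia).
  have -> : (N.+1 - k = 0)%N by lia.
  have -> : (N - k = 0)%N by lia.
  rewrite /=; ring.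
try (have -> : minn k N.+1 = k by lia).
try (have -> : minn k N = k by lia).
have -> : (N.+1 - k = (N - k).+1)%N by lia.
rewrite /=; ring.
Qed.

Lemma prod_const (N : nat) (a : R) : \big[Rmult/1]_(i < N) a = a ^ N.
Proof.
elim: N => [|N IH]; first by rewrite big_ord0.
by rewrite big_ord_recr /= IH; ring.
Qed.

Lemma sum_ind N (i : 'I_N) (f : 'I_N -> R) :
  sumR (fun t => if t == i then f t else 0) = f i.
Proof. by rewrite /sumR -big_mkcond big_pred1_eq. Qed.

Lemma prod_ind N (i : 'I_N) (a : R) :
  \big[Rmult/1]_(t < N) (if t == i then a else 1) = a.
Proof. by rewrite -big_mkcond big_pred1_eq. Qed.

Lemma sum_upd N (F G : 'I_N -> R) (m : 'I_N) :
  (forall i, i != m -> G i = F i) -> sumR G = sumR F - F m + G m.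
Proof.
move=> H; rewrite /sumR (bigD1 m) //= [in RHS](bigD1 m) //=.
rewrite (eq_bigr F) => [|i /H //]; ring.
Qed.

Lemma sum_ge_term N (F : 'I_N -> R) (m : 'I_N) :
  (forall i, 0 <= F i) -> F m <= sumR F.
Proof.
move=> H; rewrite /sumR (bigD1 m) //=.
rewrite -{1}(Rplus_0_r (F m)); apply: Rplus_le_compat_l; apply: sum_ge0 => i _; exact: H.
Qed.

Lemma sum_split N (F G : 'I_N -> R) : sumR (fun i => F i + G i) = sumR F + sumR G.
Proof. by rewrite /sumR big_split. Qed.

Lemma sumR_le N (F G : 'I_N -> R) : (forall i, F i <= G i) -> sumR F <= sumR G.
Proof. move=> H; exact: sum_le. Qed.

Lemma sumR_scal N a (F : 'I_N -> R) : sumR (fun i => a * F i) = a * sumR F.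
Proof. exact: sum_scal. Qed.

Lemma sumR_ext N (F G : 'I_N -> R) : (forall i, F i = G i) -> sumR F = sumR G.
Proof. by move=> H; apply: eq_bigr => i _. Qed.

Lemma argmax_seq (T : eqType) (f : T -> R) (P : pred T) (s : seq T) x0 :
  x0 \in s -> P x0 -> exists m, m \in s /\ P m /\ forall x, x \in s -> P x -> f x <= f m.
Proof.
elim: s x0 => [//|y s IH] x0; rewrite inE => /orP [/eqP <-|hin] hP.
  case Hs: (has P s).
    case/hasP: Hs => z zin Pz; case: (IH z zin Pz) => m [min [Pm Hm]].
    case: (Rle_lt_dec (f x0) (f m)) => hle.
      exists m; split; first by rewrite inE min orbT.
      split=> // x; rewrite inE => /orP [/eqP -> _ //|]; exact: Hm.
    exists x0; split; first by rewrite inE eqxx.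
    split=> // x; rewrite inE => /orP [/eqP -> _|xin Px]; first lra.
    have := Hm x xin Px; lra.
  exists x0; split; first by rewrite inE eqxx.
  split=> // x; rewrite inE => /orP [/eqP -> _|xin Px]; first lra.
  by move/negP: Hs; case; apply/hasP; exists x.
case: (IH x0 hin hP) => m [min [Pm Hm]].
case: (boolP (P y)) => Py.
  case: (Rle_lt_dec (f y) (f m)) => hle.
    exists m; split; first by rewrite inE min orbT.
    split=> // x; rewrite inE => /orP [/eqP -> _ //|]; exact: Hm.
  exists y; split; first by rewrite inE eqxx.
  split=> // x; rewrite inE => /orP [/eqP -> _|xin Px]; first lra.
  have := Hm x xin Px; lra.
exists m; split; first by rewrite inE min orbT.
split=> // x; rewrite inE => /orP [/eqP -> Px|]; last exact: Hm.
by rewrite Px in Py.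
Qed.

Lemma argmax_ord N (f : 'I_N -> R) (P : pred 'I_N) (x0 : 'I_N) :
  P x0 -> exists m, P m /\ forall x, P x -> f x <= f m.
Proof.
move=> hP; case: (@argmax_seq _ f P (index_enum 'I_N) x0 (mem_index_enum x0) hP)
  => m [_ [Pm Hm]].
by exists m; split=> // x Px; apply: Hm => //; exact: mem_index_enum.
Qed.


Definition cc (k : nat) (c : R) (i : nat) : R := if (i < k)%N then c else 1.
Definition Bn (k : nat) (s c : R) (j i : nat) : R :=
  s * (if j == 0%N then (if i == 0%N then 2 * c else 0)
       else if (j < k)%N then (if i == j then c else if i == 0%N then - c else 0)
       else (if i == j then 1 else 0)).
Definition BB (N k : nat) (s c : R) : 'I_N -> vec N := fun j i => Bn k s c j i.
Arguments BB N k s c : clear implicits.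

Definition LP (N k : nat) (s c : R) (v : vec N) : Prop :=
  exists W : vec N, (forall i, isZ (W i)) /\
    (exists m, isZ m /\ sumR (fun i : 'I_N => if (i < k)%N then W i else 0) = 2 * m) /\
    forall i, v i = s * cc k c i * W i.

Lemma col_nz n k s c (z : 'I_n.+1 -> Z) (i : 'I_n.+1) : (i : nat) <> 0%N ->
  lattice_pt (BB n.+1 k s c) z i = s * cc k c i * IZR (z i).
Proof.
move=> hi; have hi0 : (i == 0%N :> nat) = false by apply/eqP.
rewrite /lattice_pt /sumR (bigD1 i) //= big1 => [|j hj].
  rewrite /BB /Bn /cc hi0 eqxx; case: ifP => _; ring.
have hij : (i == j :> nat) = false.
  by apply/negP => /eqP/val_inj E; rewrite E eqxx in hj.
rewrite /BB /Bn hij hi0 /=; case: ifP => _; [|case: ifP => _]; ring.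
Qed.

Lemma col_0 n k s c (z : 'I_n.+1 -> Z) : (0 < k)%N ->
  lattice_pt (BB n.+1 k s c) z ord0 =
  s * c * (2 * IZR (z ord0) - sumR (fun j : 'I_n.+1 => if (0 < j < k)%N then IZR (z j) else 0)).
Proof.
move=> hk; rewrite /lattice_pt /sumR (bigD1 ord0) //= [X in _ = _ * (_ - X)](bigD1 ord0) //=.
rewrite (eq_bigr (fun j : 'I_n.+1 => (-(s*c)) * (if (0 < j < k)%N then IZR (z j) else 0)))
  => [|j hj].
  rewrite sum_scal /BB /Bn /=; ring.
have hj0 : (0 < j)%N by case: j hj => [[|j] ?] //.
have hj1 : (0%N == j :> nat) = false by apply/negP => /eqP E; rewrite -E in hj0.
have hj2 : (j == 0%N :> nat) = false by apply/negP => /eqP E; rewrite E in hj0.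
rewrite /BB /Bn hj0 hj1 hj2 /=; case: ifP => _; ring.
Qed.

Lemma splitk n k (F : 'I_n.+1 -> R) : (0 < k)%N ->
  sumR (fun i : 'I_n.+1 => if (i < k)%N then F i else 0) =
  F ord0 + sumR (fun i : 'I_n.+1 => if (0 < i < k)%N then F i else 0).
Proof.
move=> hk; rewrite /sumR (bigD1 ord0) //= [X in _ = _ + X](bigD1 ord0) //= hk.
rewrite Rplus_0_l; congr (_ + _); apply: eq_bigr => i hi.
have hi0 : (0 < i)%N by case: i hi => [[|i] ?] //.
by rewrite hi0.
Qed.

Definition zof (x : R) : Z := (up x - 1)%Z.
Lemma zofK x : isZ x -> IZR (zof x) = x.
Proof.
move=> [z ->]; rewrite /zof minus_IZR.
have <- : (z + 1)%Z = up (IZR z).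
  apply: tech_up; rewrite plus_IZR; lra.
rewrite plus_IZR; ring.
Qed.

Lemma lat_char n k s c (v : vec n.+1) : (0 < k)%N ->
  in_lattice (BB n.+1 k s c) v <-> LP k s c v.
Proof.
move=> hk; split.
  case=> z Hz.
  set T := sumR (fun j : 'I_n.+1 => if (0 < j < k)%N then IZR (z j) else 0).
  exists (fun i : 'I_n.+1 => if i == ord0 then 2 * IZR (z ord0) - T else IZR (z i)).
  split; [|split].
  - move=> i; case: ifP => _; last by exists (z i).
    apply: isZ_add; first by apply: isZ_mul; [exists 2%Z|exists (z ord0)].
    apply: isZ_opp; apply: isZ_sum => j _; case: ifP => _; [by exists (z j)|exact: isZ_0].
  - exists (IZR (z ord0)); split; first by exists (z ord0).
    rewrite splitk // eqxx.
    have -> : sumR (fun i : 'I_n.+1 => if (0 < i < k)%N then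
        (if i == ord0 then 2 * IZR (z ord0) - T else IZR (z i)) else 0) = T.
      apply: sumR_ext => i; case: ifP => // /andP [h0 _].
      have -> : (i == ord0) = false by apply/negP => /eqP E; rewrite E in h0.
      by [].
    ring.
  - move=> i; rewrite Hz; case: ifP => [/eqP ->|hi].
      by rewrite col_0 // /cc hk.
    rewrite col_nz //; move=> E; move/negP: hi; apply; apply/eqP; exact: val_inj.
case=> W [HW [[m [hm Hsum]] Hv]].
exists (fun i : 'I_n.+1 => if i == ord0 then zof m else zof (W i)).
move=> i; rewrite Hv; case: (boolP (i == ord0)) => [/eqP ->|hi].
  rewrite col_0 // /= zofK // /cc hk.
  have -> : sumR (fun j : 'I_n.+1 => if (0 < j < k)%N then
     IZR (if j == ord0 then zof m else zof (W j)) else 0) =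
     sumR (fun j : 'I_n.+1 => if (0 < j < k)%N then W j else 0).
    apply: sumR_ext => j; case: ifP => // /andP [h0 _].
    have -> : (j == ord0) = false by apply/negP => /eqP E; rewrite E in h0.
    by rewrite zofK.
  move: Hsum; rewrite splitk // => Hsum.
  have -> : W ord0 = 2 * m - sumR (fun j : 'I_n.+1 => if (0 < j < k)%N then W j else 0) by lra.
  ring.
rewrite col_nz ?(negbTE hi) ?zofK //; move=> E; move/negP: hi; apply; apply/eqP; exact: val_inj.
Qed.


Lemma cc2 k c (i : nat) : c * c = / 2 -> cc k c i * cc k c i = if (i < k)%N then / 2 else 1.
Proof. by rewrite /cc => h; case: ifP => _ //; ring. Qed.

Lemma cc_pos k c (i : nat) : 0 < c -> 0 < cc k c i.
Proof. by rewrite /cc; case: ifP => _ //; lra. Qed.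

Lemma INR_k4 k : (4 <= k)%N -> 4 <= INR k.
Proof.
move=> h; have h' : (4 <= k)%coq_nat by lia.
have := le_INR _ _ h'; rewrite /= ; lra.
Qed.

Lemma lat_lower n k s c (v : vec n.+1) : c * c = / 2 -> 0 < s ->
  LP k s c v -> Defs.nonzero v -> s * s <= dotR v v.
Proof.
move=> hc hs [W [HW [[m [hm Hs]] Hv]]] [i hi].
have E : dotR v v = s * s * sumR (fun t : 'I_n.+1 =>
   /2 * (if (t < k)%N then W t else 0) +
   (if (t < k)%N then W t * (W t - 1) / 2 else W t * W t)).
  rewrite /dotR -sumR_scal; apply: sumR_ext => t; rewrite !Hv.
  have := cc2 k t hc; case: ifP => _ h.
    have -> : s * cc k c t * W t * (s * cc k c t * W t) = s * s * (cc k c t * cc k c t) * (W t * W t) by ring.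
    rewrite h; field.
  have -> : s * cc k c t * W t * (s * cc k c t * W t) = s * s * (cc k c t * cc k c t) * (W t * W t) by ring.
  rewrite h; ring.
have EQ := E; rewrite sum_split sumR_scal Hs in E.
set Q := sumR _ in EQ.
have HQ : Q = m + sumR (fun t : 'I_n.+1 => if (t < k)%N then W t * (W t - 1) / 2 else W t * W t).
  rewrite /Q sum_split sumR_scal Hs; field.
have ZQ : isZ Q.
  rewrite HQ; apply: isZ_add => //; apply: isZ_sum => t _; case: ifP => _.
    exact: isZ_half_consec.
  exact: isZ_mul.
have hWi : W i <> 0 by move=> h; apply: hi; rewrite Hv h; ring.
have Qpos : 0 < Q.
  have Hterm : forall t : 'I_n.+1, 0 <= /2 * (if (t < k)%N then W t else 0) +
      (if (t < k)%N then W t * (W t - 1) / 2 else W t * W t).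
    move=> t; case: ifP => _.
      have -> : / 2 * W t + W t * (W t - 1) / 2 = W t * W t / 2 by field.
      nra.
    nra.
  apply: Rlt_le_trans (sum_ge_term i Hterm).
  case: ifP => _.
    have -> : / 2 * W i + W i * (W i - 1) / 2 = W i * W i / 2 by field.
    have := Rsqr_pos_lt _ hWi; rewrite /Rsqr; lra.
  have := Rsqr_pos_lt _ hWi; rewrite /Rsqr; lra.
have := isZ_pos_ge1 ZQ Qpos; rewrite EQ => h1.
have : s * s * 1 <= s * s * Q by apply: Rmult_le_compat_l; nra.
lra.
Qed.

Definition rr2 (N k : nat) (s : R) := s * s * (INR k / 8 + INR (N - k) / 4).

Definition xhole (N k : nat) (s c : R) : vec N := fun t => s * cc k c t / 2.
Arguments xhole N k s c : clear implicits.

Lemma deep_lower n k s c (v : vec n.+1) : c * c = / 2 -> (k <= n.+1)%N ->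
  LP k s c v -> rr2 n.+1 k s <= dotR (subv (xhole n.+1 k s c) v) (subv (xhole n.+1 k s c) v).
Proof.
move=> hc hkn [W [HW [_ Hv]]].
have E : dotR (subv (xhole n.+1 k s c) v) (subv (xhole n.+1 k s c) v) =
   s * s * sumR (fun t : 'I_n.+1 => (cc k c t * cc k c t) * ((/2 - W t) * (/2 - W t))).
  rewrite /dotR -sumR_scal; apply: sumR_ext => t; rewrite /subv /xhole Hv; field.
rewrite E /rr2; apply: Rmult_le_compat_l; first nra.
have -> : INR k / 8 + INR (n.+1 - k) / 4 =
   sumR (fun t : 'I_n.+1 => if (t < k)%N then / 8 else / 4).
  rewrite sum_count; have -> : minn k n.+1 = k by lia. field.
apply: sumR_le => t; rewrite (cc2 k t hc).
have h := isZ_consec_ge (HW t).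
case: ifP => _; nra.
Qed.

Definition rnd (x : R) := IZR (up (x + / 2)) - 1.

Lemma rnd_isZ x : isZ (rnd x).
Proof. by exists (up (x + / 2) - 1)%Z; rewrite /rnd minus_IZR. Qed.

Lemma rnd_bound x : - / 2 <= x - rnd x < / 2.
Proof.
rewrite /rnd; case: (archimed (x + / 2)) => h1 h2; lra.
Qed.

Lemma flip_ex x : exists d, (d = 1 \/ d = -1) /\
  (x - (rnd x + d)) * (x - (rnd x + d)) =
   (x - rnd x) * (x - rnd x) + 1 - 2 * Rabs (x - rnd x).
Proof.
case: (Rle_dec (rnd x) x) => h.
  exists 1; split; first by left.
  rewrite Rabs_pos_eq; [ring|lra].
exists (-1); split; first by right.
rewrite Rabs_left; [ring|lra].
Qed.

Lemma Dround n k (y : vec n.+1) : (4 <= k)%N -> (k <= n.+1)%N ->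
  exists W : vec n.+1, (forall i, isZ (W i)) /\
   (exists m, isZ m /\ sumR (fun i : 'I_n.+1 => if (i < k)%N then W i else 0) = 2 * m) /\
   sumR (fun i : 'I_n.+1 => if (i < k)%N then (y i - W i) * (y i - W i) else 0) <= INR k / 4 /\
   forall i : 'I_n.+1, (k <= i)%N -> (y i - W i) * (y i - W i) <= / 4.
Proof.
move=> hk4 hkn.
have hk4R := INR_k4 hk4.
have hmin : minn k n.+1 = k by lia.
set W0 := fun i : 'I_n.+1 => rnd (y i).
have HW0 : forall i, isZ (W0 i) by move=> i; exact: rnd_isZ.
have B0 : forall i, (y i - W0 i) * (y i - W0 i) <= / 4.
  move=> i; have := rnd_bound (y i); rewrite /W0; nra.
have ZS : isZ (sumR (fun i : 'I_n.+1 => if (i < k)%N then W0 i else 0)).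
  by apply: isZ_sum => i _; case: ifP => _; [exact: HW0|exact: isZ_0].
case: ZS => t Ht.
case: (Zeven_odd_dec t) => [/Zeven_ex [u Hu]|/Zodd_ex [u Hu]].
  exists W0; split => //; split.
    exists (IZR u); split; first by exists u.
    by rewrite Ht Hu mult_IZR.
  split => // .
  apply: Rle_trans (sumR_le (G := fun i : 'I_n.+1 => if (i < k)%N then / 4 else 0) _) _.
    by move=> i; case: ifP => _; [exact: B0|lra].
  rewrite sum_count hmin; lra.
have hk0 : (0 < k)%N by lia.
have [m [Pm Hm]] := @argmax_ord _ (fun i => (y i - W0 i) * (y i - W0 i))
   (fun i : 'I_n.+1 => (i < k)%N) ord0 hk0.
have [d [hd Hd]] := flip_ex (y m).
set W := fun i : 'I_n.+1 => if i == m then W0 m + d else W0 i.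
exists W; split; [|split; [|split]].
- move=> i; rewrite /W; case: ifP => _ //; apply: isZ_add => //.
  by case: hd => ->; [exists 1%Z|exists (-1)%Z].
- have -> : sumR (fun i : 'I_n.+1 => if (i < k)%N then W i else 0) =
      sumR (fun i : 'I_n.+1 => if (i < k)%N then W0 i else 0) - W0 m + (W0 m + d).
    rewrite (sum_upd (F := fun i : 'I_n.+1 => if (i < k)%N then W0 i else 0) (m := m)).
      by rewrite /= Pm /W eqxx.
    by move=> i hi; rewrite /W (negbTE hi).
  rewrite Ht Hu plus_IZR mult_IZR.
  case: hd => ->.
    exists (IZR u + 1); split; first by exists (u + 1)%Z; rewrite plus_IZR.
    simpl; ring.
  exists (IZR u); split; first by exists u.
  simpl; ring.
- have -> : sumR (fun i : 'I_n.+1 => if (i < k)%N then (y i - W i) * (y i - W i) else 0) =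
      sumR (fun i : 'I_n.+1 => if (i < k)%N then (y i - W0 i) * (y i - W0 i) else 0)
      - (y m - W0 m) * (y m - W0 m) + (y m - (W0 m + d)) * (y m - (W0 m + d)).
    rewrite (sum_upd (F := fun i : 'I_n.+1 => if (i < k)%N then (y i - W0 i) * (y i - W0 i) else 0) (m := m)).
      by rewrite /= Pm /W eqxx.
    by move=> i hi; rewrite /W (negbTE hi).
  rewrite /W0 Hd.
  set e := y m - rnd (y m).
  have S1 : sumR (fun i : 'I_n.+1 => if (i < k)%N then (y i - rnd (y i)) * (y i - rnd (y i)) else 0)
      <= INR k * (e * e).
    apply: Rle_trans (sumR_le (G := fun i : 'I_n.+1 => if (i < k)%N then e * e else 0) _) _.
      move=> i; case: ifP => hi; last lra.
      exact: (Hm i hi).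
    rewrite sum_count hmin; lra.
  have eb := rnd_bound (y m).
  have ha : Rabs e * Rabs e = e * e.
    by rewrite -Rabs_mult Rabs_pos_eq //; nra.
  have ha0 := Rabs_pos e.
  have ha1 : Rabs e <= / 2.
    rewrite /e; apply: Rabs_le; lra.
  have := Rmult_le_pos (1 - 2 * Rabs e) (INR k * (1 + 2 * Rabs e) / 4 - 1).
  move=> H; have H' := H ltac:(lra) ltac:(nra).
  nra.
- move=> i hi; have him : (i == m) = false.
    by apply/negP => /eqP E; rewrite E in hi; lia.
  by rewrite /W him; apply: B0.
Qed.

Lemma cover_upper n k s c (x : vec n.+1) : c * c = / 2 -> 0 < c -> 0 < s ->
  (4 <= k)%N -> (k <= n.+1)%N ->
  exists v, LP k s c v /\ dotR (subv x v) (subv x v) <= rr2 n.+1 k s.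
Proof.
move=> hc hc0 hs hk4 hkn.
have [W [HW [HS [H1 H2]]]] := Dround (fun t : 'I_n.+1 => x t / (s * cc k c t)) hk4 hkn.
exists (fun t : 'I_n.+1 => s * cc k c t * W t); split; first by exists W.
have E : dotR (subv x (fun t : 'I_n.+1 => s * cc k c t * W t)) (subv x (fun t : 'I_n.+1 => s * cc k c t * W t)) =
   s * s * sumR (fun t : 'I_n.+1 => (cc k c t * cc k c t) *
     ((x t / (s * cc k c t) - W t) * (x t / (s * cc k c t) - W t))).
  rewrite /dotR -sumR_scal; apply: sumR_ext => t; rewrite /subv.
  have := cc_pos k t hc0; move=> hct; field; lra.
rewrite E /rr2; apply: Rmult_le_compat_l; first nra.
set Y := fun t : 'I_n.+1 => (x t / (s * cc k c t) - W t) * (x t / (s * cc k c t) - W t).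
have -> : sumR (fun t : 'I_n.+1 => cc k c t * cc k c t * Y t) =
  / 2 * sumR (fun t : 'I_n.+1 => if (t < k)%N then Y t else 0) +
  sumR (fun t : 'I_n.+1 => if (t < k)%N then 0 else Y t).
  rewrite -sumR_scal -sum_split; apply: sumR_ext => t; rewrite (cc2 k t hc).
  case: ifP => _; ring.
have S2 : sumR (fun t : 'I_n.+1 => if (t < k)%N then 0 else Y t) <= INR (n.+1 - k) / 4.
  apply: Rle_trans (sumR_le (G := fun t : 'I_n.+1 => if (t < k)%N then 0 else / 4) _) _.
    move=> t; case: ifP => ht; first lra.
    apply: H2; lia.
  rewrite sum_count; lra.
rewrite /Y in S2 *; lra.
Qed.


Definition ee N (i : 'I_N) : vec N := fun t => if t == i then 1 else 0.
Definition jj n (i : 'I_n.+1) : 'I_n.+1 := if i == ord0 then inord 1 else ord0.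

Lemma jj_neq n (i : 'I_n.+1) : (1 <= n)%N -> jj i != i.
Proof.
move=> hn; rewrite /jj; case: ifP => [/eqP ->|h].
  apply/negP => /eqP/(f_equal val); rewrite /= inordK //; lia.
by rewrite eq_sym h.
Qed.

Lemma jj_lt n k (i : 'I_n.+1) : (2 <= k)%N -> (1 <= n)%N -> (jj i < k)%N.
Proof. move=> hk hn; rewrite /jj; case: ifP => _ /=; rewrite ?inordK; lia. Qed.

Lemma ee2 N (i : 'I_N) t : ee i t * ee i t = ee i t.
Proof. by rewrite /ee; case: ifP => _; ring. Qed.

Lemma ee_orth N (i j : 'I_N) t : i != j -> ee i t * ee j t = 0.
Proof.
move=> h; rewrite /ee; case: (boolP (t == i)) => [/eqP ->|_]; last ring.
by rewrite (negbTE h); ring.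
Qed.

Lemma sum_ee N (i : 'I_N) : sumR (ee i) = 1.
Proof. by rewrite -(sum_ind i (fun _ => 1)); apply: sumR_ext => t. Qed.

Lemma ee_low N k (i : 'I_N) (t : 'I_N) : (i < k)%N -> (if (t < k)%N then ee i t else 0) = ee i t.
Proof. by rewrite /ee => h; case: (boolP (t == i)) => [/eqP ->|_]; rewrite ?h //; case: ifP. Qed.

Lemma ee_high N k (i : 'I_N) (t : 'I_N) : (k <= i)%N -> (if (t < k)%N then ee i t else 0) = 0.
Proof.
rewrite /ee => h; case: (boolP (t == i)) => [/eqP ->|_]; last by case: ifP.
by have -> : (i < k)%N = false by lia.
Qed.

Lemma cc_ee_low N k c (i : 'I_N) (t : 'I_N) : (i < k)%N -> cc k c t * ee i t = c * ee i t.
Proof. rewrite /ee /cc => h; case: (boolP (t == i)) => [/eqP ->|_]; rewrite ?h; ring. Qed.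

Lemma cc_ee_high N k c (i : 'I_N) (t : 'I_N) : (k <= i)%N -> cc k c t * ee i t = ee i t.
Proof.
rewrite /ee /cc => h; case: (boolP (t == i)) => [/eqP ->|_]; last ring.
have -> : (i < k)%N = false by lia.
ring.
Qed.

Definition uv n k s c (b : bool) (i : 'I_n.+1) : vec n.+1 := fun t =>
  if (i < k)%N then s * c * (ee i t + (if b then 1 else -1) * ee (jj i) t) else s * ee i t.
Arguments uv n k s c b i : clear implicits.

Lemma uv_LP n k s c b (i : 'I_n.+1) : (2 <= k)%N -> (1 <= n)%N -> LP k s c (uv n k s c b i).
Proof.
move=> hk hn; set sg := (if b then 1 else -1).
exists (fun t => if (i < k)%N then ee i t + sg * ee (jj i) t else ee i t).
have hj := jj_lt i hk hn.
split; [|split].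
- move=> t; case: ifP => _; last by rewrite /ee; case: ifP => _; [exact: isZ_1|exact: isZ_0].
  apply: isZ_add; first by rewrite /ee; case: ifP => _; [exact: isZ_1|exact: isZ_0].
  apply: isZ_mul; first by rewrite /sg; clear sg; case: b; [exact: isZ_1|exists (-1)%Z].
  by rewrite /ee; case: ifP => _; [exact: isZ_1|exact: isZ_0].
- case: (ltnP i k) => hi.
    have -> : sumR (fun t : 'I_n.+1 => if (t < k)%N then ee i t + sg * ee (jj i) t else 0)
       = sumR (ee i) + sg * sumR (ee (jj i)).
      rewrite -sumR_scal -sum_split; apply: sumR_ext => t.
      case: ifP => ht; first ring.
      have e1 := ee_low t hi; have e2 := ee_low t hj; rewrite ht in e1 e2; rewrite -e1 -e2; ring.
    rewrite !sum_ee /sg; clear sg; case: b.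
      by exists 1; split; [exact: isZ_1|ring].
    by exists 0; split; [exact: isZ_0|ring].
  exists 0; split; first exact: isZ_0.
  rewrite Rmult_0_r /sumR big1 // => t _; exact: ee_high.
- move=> t; rewrite /uv /sg; clear sg; case: ifP => hi.
    have e1 := cc_ee_low c t hi; have e2 := cc_ee_low c t hj.
    have -> : s * cc k c t * (ee i t + (if b then 1 else -1) * ee (jj i) t) =
      s * (cc k c t * ee i t) + s * (if b then 1 else -1) * (cc k c t * ee (jj i) t) by ring.
    rewrite e1 e2; ring.
  have hki : (k <= i)%N by lia.
  rewrite Rmult_assoc (cc_ee_high c t hki); ring.
Qed.

Lemma uv_dot n k s c b (i : 'I_n.+1) : c * c = / 2 -> (2 <= k)%N -> (1 <= n)%N ->
  dotR (uv n k s c b i) (uv n k s c b i) = s * s.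
Proof.
move=> hc hk hn; rewrite /dotR /uv; case hi : (i < k)%N.
  have hne : i != jj i by rewrite eq_sym; exact: jj_neq.
  set sg := (if b then 1 else -1).
  have hsg : sg * sg = 1 by rewrite /sg; clear sg; case: b; ring.
  have -> : sumR (fun t : 'I_n.+1 => s * c * (ee i t + sg * ee (jj i) t) *
     (s * c * (ee i t + sg * ee (jj i) t))) =
     s * s * (c * c) * (sumR (ee i) + sumR (ee (jj i))).
    rewrite -sum_split -sumR_scal; apply: sumR_ext => t.
    have h1 := ee2 i t; have h2 := ee2 (jj i) t.
    have h3 := ee_orth t hne.
    have -> : s * c * (ee i t + sg * ee (jj i) t) * (s * c * (ee i t + sg * ee (jj i) t)) =
      s * s * (c * c) * (ee i t * ee i t + 2 * sg * (ee i t * ee (jj i) t) +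
        (sg * sg) * (ee (jj i) t * ee (jj i) t)) by ring.
    rewrite h1 h2 h3 hsg; ring.
  rewrite !sum_ee hc; field.
have -> : sumR (fun t : 'I_n.+1 => s * ee i t * (s * ee i t)) = s * s * sumR (ee i).
  rewrite -sumR_scal; apply: sumR_ext => t.
  have h1 := ee2 i t.
  have -> : s * ee i t * (s * ee i t) = s * s * (ee i t * ee i t) by ring.
  by rewrite h1.
rewrite sum_ee; ring.
Qed.

Lemma uv_nz n k s c b (i : 'I_n.+1) : 0 < s -> 0 < c -> (1 <= n)%N ->
  Defs.nonzero (uv n k s c b i).
Proof.
move=> hs hc hn; exists i; rewrite /uv /ee eqxx.
have -> : (i == jj i) = false by apply/negbTE; rewrite eq_sym; exact: jj_neq.
case: ifP => _; nra.
Qed.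

Lemma normR_ge n k s c (w : vec n.+1) : c * c = / 2 -> 0 < s ->
  in_lattice (BB n.+1 k s c) w -> Defs.nonzero w -> (0 < k)%N -> s <= normR w.
Proof.
move=> hc hs hw hnz hk.
have := lat_lower hc hs (proj1 (lat_char s c w hk) hw) hnz => h.
rewrite /normR; rewrite -(sqrt_square s); last lra.
exact: sqrt_le_1_alt.
Qed.

Lemma uv_short n k s c b (i : 'I_n.+1) : c * c = / 2 -> 0 < s -> 0 < c ->
  (2 <= k)%N -> (1 <= n)%N ->
  shortest_vector (BB n.+1 k s c) (uv n k s c b i).
Proof.
move=> hc hs hc0 hk hn; have hk0 : (0 < k)%N by lia.
split; first by apply/(lat_char _ _ _ hk0); exact: uv_LP.
split; first exact: uv_nz.
move=> w hw hnz; have := normR_ge hc hs hw hnz hk0.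
rewrite /normR uv_dot // sqrt_square //; lra.
Qed.

Lemma In_map_inv (A B : Type) (f : A -> B) (s : seq A) y :
  List.In y (map f s) -> exists x, y = f x.
Proof. elim: s => [//|x s IH] /= [<-|/IH //]; by exists x. Qed.

Lemma In_cat_inv (A : Type) (s1 s2 : seq A) y :
  List.In y (s1 ++ s2) -> List.In y s1 \/ List.In y s2.
Proof. elim: s1 => [|x s IH] /=; [by right|]; case=> [<-|/IH]; [by left; left|tauto]. Qed.

Lemma uv_sum n k s c (i t : 'I_n.+1) :
  uv n k s c true i t + uv n k s c false i t = (if (i < k)%N then 2 * s * c else 2 * s) * ee i t.
Proof. rewrite /uv; case: (i < k)%N => /=; ring. Qed.

Lemma wr n k s c : c * c = / 2 -> 0 < s -> 0 < c -> (2 <= k)%N -> (1 <= n)%N ->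
  well_rounded (BB n.+1 k s c).
Proof.
move=> hc hs hc0 hk hn x.
set a := fun i : 'I_n.+1 => if (i < k)%N then x i / (2 * s * c) else x i / (2 * s).
exists ([seq (a i, uv n k s c true i) | i <- index_enum 'I_n.+1] ++
        [seq (a i, uv n k s c false i) | i <- index_enum 'I_n.+1]).
split.
  move=> p Hp; have [H|H] := In_cat_inv Hp; have [i ->] := In_map_inv H; exact: uv_short.
move=> t; rewrite big_cat !big_map.
change (x t = sumR (fun i => a i * uv n k s c true i t) + sumR (fun i => a i * uv n k s c false i t)).
rewrite -sum_split -(sum_ind t x); apply: sumR_ext => i.
rewrite -Rmult_plus_distr_l uv_sum /ee /a; case: (boolP (i == t)) => [/eqP ->|h].
  rewrite eqxx; case: (t < k)%N; field; lra.
have h' : (t == i) = false by rewrite eq_sym; exact: negbTE h.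
rewrite h'; case: ifP => _; ring.
Qed.


Lemma powA m : 256 * 64 ^ (10 + m) < 27 * 81 ^ (10 + m).
Proof.
elim: m => [|m IH].
  rewrite addn0 !pow_IZR -!mult_IZR; apply: IZR_lt; apply/Z.ltb_lt; vm_compute; reflexivity.
have E : forall x, x ^ (10 + m).+1 = x * x ^ (10 + m) by [].
rewrite addnS !E.
have h1 : 0 < 64 ^ (10 + m) by apply: pow_lt; lra.
have h2 : 0 < 81 ^ (10 + m) by apply: pow_lt; lra.
lra.
Qed.

Lemma powB r : (r <= 3)%N -> 27 * 4 ^ (r + 1) <= 256 * 3 ^ r.
Proof. by case: r => [|[|[|[|r]]]] //= _; lra. Qed.

Lemma pow_key q r : (10 <= q)%N -> (r <= 3)%N -> 4 ^ (3 * q + (r + 1)) < 3 ^ (4 * q + r).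
Proof.
move=> hq hr; rewrite (pow_add 4 (3 * q)) (pow_add 3 (4 * q)).
have E1 : 4 ^ (3 * q) = 64 ^ q.
  rewrite (_ : (3 * q)%N = Nat.mul 3 q) // pow_mult; f_equal; ring.
have E2 : 3 ^ (4 * q) = 81 ^ q.
  rewrite (_ : (4 * q)%N = Nat.mul 4 q) // pow_mult; f_equal; ring.
rewrite E1 E2.
have [m ->] : exists m, q = (10 + m)%N by exists (q - 10)%N; lia.
have A := powA m; have B := powB hr.
have h1 : 0 < 64 ^ (10 + m) by apply: pow_lt; lra.
have h2 : 0 < 3 ^ r by apply: pow_lt; lra.
have h3 : 0 < 4 ^ (r + 1) by apply: pow_lt; lra.
nra.
Qed.

Definition qq (N : nat) := (N %/ 4)%N.

Definition keyb (N : nat) : bool :=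
  Z.ltb (Z.of_nat N ^ Z.of_nat N)
   (2 ^ Z.of_nat (qq N - 1) * 2 ^ Z.of_nat (qq N - 1) * Z.of_nat (N - qq N) ^ Z.of_nat N).

Lemma key_small N : (30 <= N <= 41)%N -> keyb N.
Proof.
move=> h.
have : N \in iota 30 12 by rewrite mem_iota; lia.
have : all keyb (iota 30 12) by vm_compute.
by move/allP => H /H.
Qed.

Lemma key_real N : (30 <= N)%N ->
  INR N ^ N < 2 ^ (qq N - 1) * 2 ^ (qq N - 1) * INR (N - qq N) ^ N.
Proof.
move=> hN.
case: (leqP N 41) => hN2.
  have := key_small (N := N) ltac:(lia); rewrite /keyb => /Z.ltb_lt h.
  rewrite !INR_IZR_INZ !pow_IZR -!mult_IZR; exact: IZR_lt.
set q := qq N.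
have hq : (10 <= q)%N by rewrite /q /qq; lia.
set r := (N %% 4)%N.
have hr : (r <= 3)%N by rewrite /r; lia.
have hNqr : N = (4 * q + r)%N by rewrite /q /qq /r; lia.
have h4q : (4 * q <= N)%N by lia.
have HNq : INR (N - q) = INR N - INR q by apply: minus_INR; lia.
have Hq4 : 4 * INR q <= INR N.
  have := le_INR (4 * q) N ltac:(lia); rewrite mult_INR /=; lra.
have HNpos : 0 < INR N by apply: lt_0_INR; lia.
have HNqpos : 0 < INR (N - q) by apply: lt_0_INR; lia.
have S1 : (3 * INR N) ^ N <= (4 * INR (N - q)) ^ N.
  apply: pow_incr; split; [lra|rewrite HNq; lra].
rewrite (Rpow_mult_distr 3) (Rpow_mult_distr 4) in S1.
have S3 : 4 ^ N < 3 ^ N * (2 ^ (q - 1) * 2 ^ (q - 1)).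
  have -> : 2 ^ (q - 1) * 2 ^ (q - 1) = 4 ^ (q - 1).
    by rewrite -Rpow_mult_distr; f_equal; ring.
  have E : N = ((q - 1) + (3 * q + (r + 1)))%N by lia.
  rewrite {1}E pow_add.
  have E2 : 3 ^ N = 3 ^ (4 * q + r) by rewrite {1}hNqr.
  rewrite E2.
  have K := pow_key hq hr.
  have h1 : 0 < 4 ^ (q - 1) by apply: pow_lt; lra.
  nra.
have P1 : 0 < 3 ^ N by apply: pow_lt; lra.
have P2 : 0 < INR (N - q) ^ N by apply: pow_lt.
have P3 : 0 < INR N ^ N by apply: pow_lt.
set A := 2 ^ (q - 1) * 2 ^ (q - 1) in S3 *.
apply: (Rmult_lt_reg_l (3 ^ N)) => //.
have := Rmult_lt_compat_r _ _ _ P2 S3. move=> ?; lra.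
Qed.

From mathcomp Require Import ssralg matrix.
From mathcomp Require Import Rstruct.
Local Open Scope R_scope.


Lemma detR_det n (M : 'I_n -> 'I_n -> R) : detR M = (\det (\matrix_(i, j) M i j))%R.
Proof.
rewrite /detR /determinant. apply: eq_bigr => s _.
under [in RHS]eq_bigr do rewrite mxE.
apply: (f_equal2 Rmult) => //.
case: (odd_perm s) => /=; rewrite ?Rmult_1_r //.
Qed.

Lemma det_BB n k s c : (0 < k)%N -> (k <= n.+1)%N ->
  detR (BB n.+1 k s c) = s ^ n.+1 * c ^ k * 2.
Proof.
move=> hk hkn; rewrite detR_det det_trig.
  transitivity (\big[Rmult/1]_(i < n.+1)
     (s * ((if (i < k)%N then c else 1) * (if i == ord0 then 2 else 1)))).
    apply: eq_bigr => i _; rewrite mxE /BB /Bn.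
    case: (boolP (i == ord0)) => [/eqP ->|hi] /=.
      rewrite hk; ring.
    have hi0 : (i == 0%N :> nat) = false.
      by apply/negP => /eqP E; move/negP: hi; apply; apply/eqP; apply: val_inj.
    rewrite hi0 eqxx; case: ifP => _; ring.
  rewrite big_split big_split /= prod_const prod_count prod_ind.
  have -> : minn k n.+1 = k by lia.
  rewrite (pow1 (n.+1 - k)) /=; ring.
apply/is_trig_mxP => i j hij; rewrite mxE /BB /Bn.
have hji : (j == i :> nat) = false by apply/eqP; lia.
have hj0 : (j == 0%N :> nat) = false by apply/eqP; lia.
rewrite hji hj0; case: ifP => _; [|case: ifP => _]; apply: Rmult_0_r.
Qed.


Theorem mainTheorem2 (d : nat) (hd : (30 <= d)%nat) :
  exists (B : 'I_d -> vec d) (r : R),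
    well_rounded B /\ unimodular B /\ is_covering_radius B r /\
    (sqrt (INR d) / 2 < r)%R.
Proof.
case: d hd => [//|n] hd.
set q := qq n.+1.
have hq : (7 <= q)%N by rewrite /q /qq; lia.
set k := (2 * q)%N.
have hk4 : (4 <= k)%N by rewrite /k; lia.
have hkn : (k <= n.+1)%N by rewrite /k /q /qq; lia.
have hk0 : (0 < k)%N by lia.
have hk2 : (2 <= k)%N by lia.
have hn1 : (1 <= n)%N by lia.
set c := / sqrt 2.
have hs2 : 0 < sqrt 2 by apply: sqrt_lt_R0; lra.
have hc : c * c = / 2.
  by rewrite /c -Rinv_mult sqrt_sqrt //; lra.
have hc0 : 0 < c by apply: Rinv_0_lt_compat.
set s := Rpower 2 (INR (q - 1) / INR n.+1).
have hs : 0 < s by rewrite /s /Rpower; apply: exp_pos.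
have hN0 : 0 < INR n.+1 by apply: lt_0_INR; lia.
have hsN : s ^ n.+1 = 2 ^ (q - 1).
  rewrite -Rpower_pow // /s Rpower_mult.
  have -> : INR (q - 1) / INR n.+1 * INR n.+1 = INR (q - 1) by field; lra.
  by rewrite Rpower_pow //; lra.
exists (BB n.+1 k s c), (sqrt (rr2 n.+1 k s)).
split; first exact: wr.
split.
  rewrite /unimodular /covolume det_BB // hsN.
  have hck : c ^ k = (/ 2) ^ q.
    rewrite /k (_ : (2 * q)%N = Nat.mul 2 q) // pow_mult.
    by rewrite (_ : c ^ 2 = / 2) //= Rmult_1_r.
  rewrite hck.
  have [p Ep] : exists p, q = p.+1 by exists (q - 1)%N; lia.
  rewrite Ep /= subn1 /=.
  have H : 2 ^ p * (/ 2) ^ p = 1 by rewrite -Rpow_mult_distr Rinv_r ?pow1 //; lra.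
  have -> : 2 ^ p * (/ 2 * (/ 2) ^ p) * 2 = 2 ^ p * (/ 2) ^ p by field.
  by rewrite H Rabs_R1.
split.
  split; first exact: sqrt_pos.
  split.
    move=> x; have [v [Hv Hd]] := cover_upper x hc hc0 hs hk4 hkn.
    exists v; split; first exact/(lat_char _ _ _ hk0).
    rewrite /normR; exact: sqrt_le_1_alt.
  move=> r' hr' Hcov.
  have [v [Hv Hn]] := Hcov (xhole n.+1 k s c).
  have HLP := proj1 (lat_char s c v hk0) Hv.
  have H := deep_lower hc hkn HLP.
  apply: Rle_trans Hn; rewrite /normR; exact: sqrt_le_1_alt.
have HNq : INR (n.+1 - q) = INR n.+1 - INR q by apply: minus_INR; rewrite /q /qq; lia.
have Hrr : rr2 n.+1 k s = s * s * INR (n.+1 - q) / 4.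
  have Hk : INR k = 2 * INR q by rewrite /k (_ : (2*q)%N = Nat.mul 2 q) // mult_INR.
  have Hnk : INR (n.+1 - k) = INR n.+1 - INR k by apply: minus_INR; lia.
  rewrite /rr2 Hnk Hk HNq; field.
have K := key_real hd; rewrite -/q in K.
have Hkey : INR n.+1 < s * s * INR (n.+1 - q).
  have hq0 : 0 <= INR (n.+1 - q) by apply: pos_INR.
  apply: Rnot_le_lt => Hle.
  have := pow_incr (s * s * INR (n.+1 - q)) (INR n.+1) n.+1 ltac:(split; [nra|exact Hle]).
  rewrite !Rpow_mult_distr hsN; lra.
have Hr0 : 0 <= rr2 n.+1 k s by rewrite Hrr; nra.
have ha := sqrt_sqrt _ Hr0.
have hb := sqrt_sqrt (INR n.+1) (pos_INR _).
have ha0 := sqrt_pos (rr2 n.+1 k s).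
have hb0 := sqrt_pos (INR n.+1).
set a := sqrt (rr2 n.+1 k s) in ha ha0 *.
set b := sqrt (INR n.+1) in hb hb0 *.
rewrite Hrr in ha.
nra.
Qed.
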